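(* Let $R:=\sqrt{D}$, let $x_{0}=R^{-1}\beta$, and let $p_{0}=q_{0}=0$. For every $k\in\mathbb{N}$, consider the routine \[ y_{k}=\operatorname{proj}_{R\mathcal{P}_{3}}(x_{k}+p_{k}),\quad p_{k+1}=x_{k}+p_{k}-y_{k},\quad x_{k+1}=\operatorname{proj}_{R\Delta_{N}}(y_{k}+q_{k}),\quad q_{k+1}=y_{k}+q_{k}-x_{k+1}. \] Then $(x_{k})$ converges to a point $q$ and $p=R^{-1}q$ is the solution to the problem \[ \min_{p\in\mathcal{P}} \tfrac{1}{2}p^{\top}Dp-p^{\top}\beta \] with $\mathcal{P}=\{p\in\Delta_{N}\,:\,\mu_{-}\leq \sum_{i=1}^{N}p_{i}\xi_{i}\leq\mu_{+}\}$.
   Context: $\mathcal{H}$ is a real Hilbert space, $\lambda>0$, $a_{i}\in\mathcal{H}\setminus\{0\}$ and $\xi_{i}\in\mathbb{R}$ for $i=1,\ldots,N$, $\mathbf{x}=(x_1,\ldots,x_N)\in\mathcal{H}^N$. $D:=\mathrm{diag}(\lambda\|a_{1}\|^{2},\ldots,\lambda\|a_{N}\|^{2})$ (a positive definite diagonal matrix) and $\beta:=(\langle a_{i},x_{i}\rangle+\xi_{i})_{i=1}^{N}\in\mathbb{R}^N$. $\Delta_{N}=\{p\in\mathbb{R}^{N}_{+}:\sum_{i=1}^{N}p_{i}=1\}$ is the probability simplex, $\mathcal{P}_{1}=\{p\in\mathbb{R}^{N}:\sum_{i=1}^N p_i=1\}$, $\mathcal{P}_{3}=\{p\in\mathbb{R}^{N}\,:\,\mu_{-}\leq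 \sum_{i=1}^{N}p_{i}\xi_{i}\leq\mu_{+}\}$ with $\mu_{-},\mu_{+}\in\mathbb{R}$ such that $\mathrm{int}(\mathbb{R}^{N}_{+})\cap\mathrm{int}(\mathcal{P}_{3})\cap\mathcal{P}_{1}\neq\emptyset$. $\operatorname{proj}_{C}$ denotes the Euclidean projection onto a set $C$, and $RC=\{Rp:p\in C\}$. *)

(* Defs.v *)
From HB Require Import structures.
From mathcomp Require Import all_boot all_order all_algebra.
From mathcomp Require Import all_classical all_reals all_analysis.
Set Implicit Arguments. Unset Strict Implicit. Unset Printing Implicit Defensive.
Import Order.TTheory GRing.Theory Num.Theory.
Import numFieldNormedType.Exports.
Local Open Scope classical_set_scope.
Local Open Scope ring_scope.

Definition is_hilbert_inner (R : realType) (V : completeNormedModType R)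
  (ip : V -> V -> R) : Prop :=
  [/\ forall u v, ip u v = ip v u,
      forall a u v w, ip (a *: u + v) w = a * ip u w + ip v w,
      forall v, v != 0 -> 0 < ip v v
    & forall v, `|v| = Num.sqrt (ip v v)].

Definition sqnorm (R : realType) (N : nat) (v : 'rV[R]_N) : R :=
  \sum_(i < N) (v ord0 i) ^+ 2.

Definition is_proj (R : realType) (N : nat) (C : set 'rV[R]_N)
  (x y : 'rV[R]_N) : Prop :=
  C y /\ forall z, C z -> sqnorm (x - y) <= sqnorm (x - z).

Definition simplex (R : realType) (N : nat) : set 'rV[R]_N :=
  [set p | (forall i, 0 <= p ord0 i) /\ \sum_(i < N) p ord0 i = 1].
Definition P1set (R : realType) (N : nat) : set 'rV[R]_N :=
  [set p | \sum_(i < N) p ord0 i = 1].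
Definition nonneg_orthant (R : realType) (N : nat) : set 'rV[R]_N :=
  [set p | forall i, 0 <= p ord0 i].
Definition P3set (R : realType) (N : nat) (xi : 'I_N -> R) (mum mup : R)
  : set 'rV[R]_N :=
  [set p | mum <= \sum_(i < N) p ord0 i * xi i <= mup].
Definition Pset (R : realType) (N : nat) (xi : 'I_N -> R) (mum mup : R)
  : set 'rV[R]_N :=
  @simplex R N `&` P3set xi mum mup.

(* Multiplication by the diagonal matrix diag(r) and the image r C. *)
Definition dmul (R : realType) (N : nat) (r : 'I_N -> R) (p : 'rV[R]_N)
  : 'rV[R]_N := \row_i (r i * p ord0 i).
Definition dimage (R : realType) (N : nat) (r : 'I_N -> R) (C : set 'rV[R]_N)
  : set 'rV[R]_N := [set dmul r p | p in C].

Definition objective (R : realType) (N : nat) (d : 'I_N -> R) (beta : 'rV[R]_N)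
  (p : 'rV[R]_N) : R :=
  2^-1 * \sum_(i < N) d i * (p ord0 i) ^+ 2 - \sum_(i < N) p ord0 i * beta ord0 i.

(* Main.v *)
Require Import Defs.
From HB Require Import structures.
From mathcomp Require Import all_boot all_order all_algebra.
From mathcomp Require Import all_classical all_reals all_analysis.
From mathcomp Require Import ring lra.
Import Order.TTheory GRing.Theory Num.Theory.
Import numFieldNormedType.Exports.
Local Open Scope classical_set_scope.
Local Open Scope ring_scope.
Definition dot {R : realType} {N : nat} (u v : 'rV[R]_N) : R :=
  \sum_(i < N) u ord0 i * v ord0 i.

Lemma dotC {R : realType} {N : nat} (u v : 'rV[R]_N) : dot u v = dot v u.
Proof. by apply: eq_bigr => i _; rewrite mulrC. Qed.

Lemma dotDl {R : realType} {N : nat} (u v w : 'rV[R]_N) :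
  dot (u + v) w = dot u w + dot v w.
Proof. by rewrite /dot -big_split; apply: eq_bigr => i _; rewrite !mxE mulrDl. Qed.

Lemma dotDr {R : realType} {N : nat} (u v w : 'rV[R]_N) :
  dot w (u + v) = dot w u + dot w v.
Proof. by rewrite dotC dotDl !(dotC w). Qed.

Lemma dotNl {R : realType} {N : nat} (u w : 'rV[R]_N) :
  dot (- u) w = - dot u w.
Proof. by rewrite /dot -sumrN; apply: eq_bigr => i _; rewrite !mxE mulNr. Qed.

Lemma dotNr {R : realType} {N : nat} (u w : 'rV[R]_N) :
  dot w (- u) = - dot w u.
Proof. by rewrite dotC dotNl dotC. Qed.

Lemma dotBl {R : realType} {N : nat} (u v w : 'rV[R]_N) :
  dot (u - v) w = dot u w - dot v w.
Proof. by rewrite dotDl dotNl. Qed.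

Lemma dotBr {R : realType} {N : nat} (u v w : 'rV[R]_N) :
  dot w (u - v) = dot w u - dot w v.
Proof. by rewrite dotDr dotNr. Qed.

Lemma dotZl {R : realType} {N : nat} (a : R) (u w : 'rV[R]_N) :
  dot (a *: u) w = a * dot u w.
Proof. by rewrite /dot mulr_sumr; apply: eq_bigr => i _; rewrite !mxE mulrA. Qed.

Lemma dotZr {R : realType} {N : nat} (a : R) (u w : 'rV[R]_N) :
  dot w (a *: u) = a * dot w u.
Proof. by rewrite dotC dotZl dotC. Qed.

Lemma dot0l {R : realType} {N : nat} (w : 'rV[R]_N) : dot 0 w = 0.
Proof. by rewrite /dot big1 // => i _; rewrite mxE mul0r. Qed.

Lemma dot0r {R : realType} {N : nat} (w : 'rV[R]_N) : dot w 0 = 0.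
Proof. by rewrite dotC dot0l. Qed.

Lemma sqnormE {R : realType} {N : nat} (v : 'rV[R]_N) : sqnorm v = dot v v.
Proof. by apply: eq_bigr => i _; rewrite expr2. Qed.

Lemma dot_ge0 {R : realType} {N : nat} (v : 'rV[R]_N) : 0 <= dot v v.
Proof. by apply: sumr_ge0 => i _; rewrite -expr2 sqr_ge0. Qed.

Lemma sqnorm_ge0 {R : realType} {N : nat} (v : 'rV[R]_N) : 0 <= sqnorm v.
Proof. by rewrite sqnormE dot_ge0. Qed.

Lemma coord_le_sqnorm {R : realType} {N : nat} (v : 'rV[R]_N) i :
  v ord0 i ^+ 2 <= sqnorm v.
Proof.
rewrite /sqnorm (bigD1 i) //= lerDl; apply: sumr_ge0 => j _; exact: sqr_ge0.
Qed.

Lemma dot_eq0 {R : realType} {N : nat} (u v : 'rV[R]_N) :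
  dot v v = 0 -> dot u v = 0.
Proof.
move=> h; have hi : forall i, v ord0 i = 0.
  move=> i; have := coord_le_sqnorm v i; rewrite sqnormE h => hle.
  by apply/eqP; rewrite -sqrf_eq0 eq_le hle sqr_ge0.
by rewrite /dot big1 // => i _; rewrite hi mulr0.
Qed.

Lemma cauchy_schwarz {R : realType} {N : nat} (u v : 'rV[R]_N) :
  dot u v ^+ 2 <= dot u u * dot v v.
Proof.
have [h0|hpos] := eqVneq (dot v v) 0.
  by rewrite dot_eq0 // h0 expr0n /= mulr0.
have hv : 0 < dot v v by rewrite lt_neqAle eq_sym hpos dot_ge0.
have := dot_ge0 (dot v v *: u - dot u v *: v).
rewrite !(dotBl, dotBr, dotZl, dotZr) (dotC v u) => h.
have : 0 <= dot v v * (dot u u * dot v v - dot u v ^+ 2) by nra.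
by rewrite pmulr_rge0 // subr_ge0.
Qed.
Definition cvx {R : realType} {N : nat} (C : set 'rV[R]_N) :=
  forall a b t, C a -> C b -> 0 <= t <= 1 -> C (a + t *: (b - a)).

Lemma proj_vi {R : realType} {N : nat} (C : set 'rV[R]_N) u w :
  cvx C -> is_proj C u w -> forall z, C z -> dot (u - w) (z - w) <= 0.
Proof.
move=> cC [Cw hw] z Cz.
set a := dot (u - w) (z - w); set b := dot (z - w) (z - w).
have hb : 0 <= b by exact: dot_ge0.
have key : forall t, 0 < t <= 1 -> 2 * t * a <= t ^+ 2 * b.
  move=> t /andP[t0 t1].
  have := hw _ (cC _ _ t Cw Cz (introT andP (conj (ltW t0) t1))).
  have -> : u - (w + t *: (z - w)) = (u - w) - t *: (z - w).
    by apply/rowP => i; rewrite !mxE; ring.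
  rewrite /a /b; move: (u - w) (z - w) => U Z.
  rewrite !sqnormE !(dotBl, dotBr, dotZl, dotZr) (dotC Z U); lra.
rewrite leNgt; apply/negP => ha.
have hab : 0 < a + b by lra.
set t := a / (a + b).
have ht : t * (a + b) = a by rewrite /t mulfVK // gt_eqF.
have t0 : 0 < t by rewrite /t divr_gt0.
have t1 : t <= 1 by rewrite /t ler_pdivrMr // mul1r; lra.
have := key t (introT andP (conj t0 t1)).
nra.
Qed.
Set Implicit Arguments.
Record dyk {R : realType} {N : nat} (A B : set 'rV[R]_N)
  (x y p q : nat -> 'rV[R]_N) : Prop := Dyk {
  dA : cvx A; dB : cvx B; dp0 : p 0%N = 0; dq0 : q 0%N = 0;
  dy : forall k, is_proj A (x k + p k) (y k);
  dp : forall k, p k.+1 = x k + p k - y k;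
  dx : forall k, is_proj B (y k + q k) (x k.+1);
  dq : forall k, q k.+1 = y k + q k - x k.+1 }.

Unset Implicit Arguments.

Definition Fd {R : realType} {N : nat} (x y p q : nat -> 'rV[R]_N) k : R :=
  sqnorm (x k) / 2 + dot (p k) (y k.-1) + dot (q k) (x k).

Definition Gd {R : realType} {N : nat} (x0 z : 'rV[R]_N) : R :=
  dot x0 z - sqnorm z / 2.

Ltac dexp := rewrite ?sqnormE ?(dotDl, dotDr, dotBl, dotBr, dotNl, dotNr, dotZl, dotZr, dot0l, dot0r).

Lemma dyk_inv {R : realType} {N : nat} {A B} {x y p q : nat -> 'rV[R]_N} :
  dyk A B x y p q -> forall k, x k + p k + q k = x 0%N.
Proof.
move=> H; elim=> [|k IH]; first by rewrite (dp0 H) (dq0 H) !addr0.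
rewrite -IH (dp H) (dq H); apply/rowP => i; rewrite !mxE; ring.
Qed.

Lemma dyk_y {R : realType} {N : nat} {A B} {x y p q : nat -> 'rV[R]_N} :
  dyk A B x y p q -> forall k, y k = x k + p k - p k.+1.
Proof. by move=> H k; rewrite (dp H); apply/rowP => i; rewrite !mxE; ring. Qed.

Lemma dyk_x {R : realType} {N : nat} {A B} {x y p q : nat -> 'rV[R]_N} :
  dyk A B x y p q -> forall k, x k.+1 = y k + q k - q k.+1.
Proof. by move=> H k; rewrite (dq H); apply/rowP => i; rewrite !mxE; ring. Qed.

Lemma dyk_VA {R : realType} {N : nat} {A B} {x y p q : nat -> 'rV[R]_N} :
  dyk A B x y p q -> forall k a, A a -> dot (p k.+1) (a - y k) <= 0.
Proof. by move=> H k a Aa; rewrite (dp H); apply: proj_vi (dA H) (dy H k) _ Aa. Qed.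

Lemma dyk_VB {R : realType} {N : nat} {A B} {x y p q : nat -> 'rV[R]_N} :
  dyk A B x y p q -> forall k b, B b -> dot (q k.+1) (b - x k.+1) <= 0.
Proof. by move=> H k b Bb; rewrite (dq H); apply: proj_vi (dB H) (dx H k) _ Bb. Qed.

Lemma dyk_D1 {R : realType} {N : nat} {A B} {x y p q : nat -> 'rV[R]_N} :
  dyk A B x y p q -> forall k c, A c -> B c ->
  sqnorm (x k - c) / 2 <= Fd x y p q k - Gd (x 0%N) c.
Proof.
move=> H [|k] c Ac Bc; rewrite /Fd /Gd.
  rewrite (dp0 H) (dq0 H); move: (x 0%N) => X; dexp.
  have := dotC X c; lra.
have h1 := dyk_VA H k _ Ac; have h2 := dyk_VB H k _ Bc.
rewrite -(dyk_inv H k.+1) /=.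
move: (x k.+1) (p k.+1) (q k.+1) (y k) h1 h2 => X P Q Y h1 h2.
move: h1 h2; dexp => h1 h2.
have := dotC X c; have := dotC P c; have := dotC Q c; have := dotC X P;
have := dotC X Q; have := dotC P Y; lra.
Qed.

Lemma dyk_D2 {R : realType} {N : nat} {A B} {x y p q : nat -> 'rV[R]_N} :
  dyk A B x y p q -> forall k,
  Fd x y p q k.+1 + sqnorm (p k.+1 - p k) / 2 + sqnorm (q k.+1 - q k) / 2
    <= Fd x y p q k.
Proof.
move=> H k.
have [h1 h2] : 0 <= dot (p k) (y k.-1 - y k) /\ 0 <= dot (q k) (x k - x k.+1).
  case: k => [|j]; first by rewrite (dp0 H) (dq0 H) !dot0l.
  have := dyk_VA H j _ (dy H j.+1).1.
  have := dyk_VB H j _ (dx H j.+1).1.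
  rewrite -(opprB (y j)) -(opprB (x j.+1)) !dotNr /=; lra.
rewrite /Fd /=.
move: h1 h2; rewrite (dyk_x H k) (dyk_y H k).
move: (x k) (p k) (p k.+1) (q k) (q k.+1) (y k.-1) => X P P' Q Q' Y.
dexp => h1 h2.
have := dotC X P; have := dotC X P'; have := dotC X Q; have := dotC X Q';
have := dotC X Y; have := dotC P P'; have := dotC P Q; have := dotC P Q';
have := dotC P Y; have := dotC P' Q; have := dotC P' Q'; have := dotC P' Y;
have := dotC Q Q'; have := dotC Q Y; have := dotC Q' Y.
lra.
Qed.

Lemma dyk_D3 {R : realType} {N : nat} {A B} {x y p q : nat -> 'rV[R]_N} :
  dyk A B x y p q -> forall k,
  Fd x y p q k.+1 - Gd (x 0%N) (x k.+1) = dot (p k.+1) (q k.+1 - q k).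
Proof.
move=> H k; rewrite /Fd /Gd -(dyk_inv H k.+1) /=.
have -> : q k.+1 - q k = y k - x k.+1.
  by rewrite (dyk_x H k); apply/rowP => i; rewrite !mxE; ring.
move: (x k.+1) (p k.+1) (q k.+1) (y k) => X P Q Y.
dexp; have := dotC X P; have := dotC X Q; have := dotC P Q; lra.
Qed.
Lemma harmonic_unbounded {R : realType} (M : R) :
  exists n, M < \sum_(0 <= k < n) (k.+1%:R)^-1.
Proof.
apply: contrapT => hn.
have hub : forall n, \sum_(0 <= k < n) (k.+1%:R : R)^-1 <= M.
  by move=> n; rewrite leNgt; apply/negP => h; apply: hn; exists n.
apply: (@dvg_harmonic R); apply: nondecreasing_is_cvgn.
  have := @nondecreasing_series R harmonic xpredT 0%N.
  by apply => n _ _; exact: harmonic_ge0.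
by exists M => _ [n _ <-]; exact: hub.
Qed.
Lemma sum_bound {R : realType} {N : nat} (p : nat -> 'rV[R]_N) :
  p 0%N = 0 -> forall k,
  sqnorm (p k) <= k%:R * \sum_(j < k) sqnorm (p j.+1 - p j).
Proof.
move=> p0; elim=> [|k IH]; first by rewrite p0 big_ord0 mulr0 sqnormE dot0l.
rewrite big_ord_recr /=.
set T := \sum_(j < k) _ in IH *.
set v := p k.+1 - p k.
have -> : p k.+1 = p k + v by rewrite /v; apply/rowP => i; rewrite !mxE; ring.
move: IH; rewrite /v; move: (p k) (p k.+1 - p k) => P V.
rewrite !sqnormE; dexp => IH.
have hP := dot_ge0 P; have hV := dot_ge0 V.
have := dotC V P.
have hT : 0 <= T by apply: sumr_ge0 => j _; exact: sqnorm_ge0.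
clearbody T; clear v; case: k IH => [|k] IH.
  have hP0 : dot P P = 0 by rewrite mul0r in IH; apply/eqP; rewrite eq_le IH hP.
  rewrite (dot_eq0 V _ hP0) dotC (dot_eq0 V _ hP0) /=; lra.
have hk : 0 < k.+1%:R :> R by rewrite ltr0n.
have h0 := dot_ge0 (P - k.+1%:R *: V).
move: h0; dexp => h0.
rewrite -(@ler_pM2l _ k.+1%:R) //.
rewrite [k.+2%:R]mulrS.
nra.
Qed.
Lemma dyk_tele {R : realType} {N : nat} {A B} {x y p q : nat -> 'rV[R]_N} :
  dyk A B x y p q -> forall K,
  \sum_(j < K) (sqnorm (p j.+1 - p j) + sqnorm (q j.+1 - q j))
    <= 2 * (Fd x y p q 0 - Fd x y p q K).
Proof.
move=> H; elim=> [|K IH]; first by rewrite big_ord0; lra.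
rewrite big_ord_recr /=; have := dyk_D2 H K; lra.
Qed.

Lemma dyk_Fdec {R : realType} {N : nat} {A B} {x y p q : nat -> 'rV[R]_N} :
  dyk A B x y p q -> forall m n, (m <= n)%N -> Fd x y p q n <= Fd x y p q m.
Proof.
move=> H m n /subnK <-; elim: (n - m)%N => [|k IH] //=.
rewrite addSn; apply: le_trans IH.
have := dyk_D2 H (k + m)%N.
have := sqnorm_ge0 (p (k + m).+1 - p (k + m)%N).
have := sqnorm_ge0 (q (k + m).+1 - q (k + m)%N); lra.
Qed.

Lemma dyk_Flow {R : realType} {N : nat} {A B} {x y p q : nat -> 'rV[R]_N} :
  dyk A B x y p q -> forall c k, A c -> B c -> Gd (x 0%N) c <= Fd x y p q k.
Proof.
move=> H c k Ac Bc; have := dyk_D1 H k c Ac Bc.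
have := sqnorm_ge0 (x k - c); lra.
Qed.

Lemma dyk_good {R : realType} {N : nat} {A B} {x y p q : nat -> 'rV[R]_N} c0 :
  dyk A B x y p q -> A c0 -> B c0 -> forall eta : R, 0 < eta -> eta <= 1 ->
  exists k, dot (p k.+1) (q k.+1 - q k) <= eta /\ sqnorm (q k.+1 - q k) <= eta.
Proof.
move=> H Ac0 Bc0 eta eta0 eta1.
set S0 := Fd x y p q 0 - Gd (x 0%N) c0.
have S0ge : 0 <= S0 by rewrite /S0 subr_ge0; exact: (dyk_Flow H c0 0 Ac0 Bc0).
have hsum : forall K, \sum_(j < K) sqnorm (p j.+1 - p j) <= 2 * S0 /\
                      \sum_(j < K) sqnorm (q j.+1 - q j) <= 2 * S0.
  move=> K; have := dyk_tele H K; rewrite big_split /=.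
  have := dyk_Flow H c0 K Ac0 Bc0.
  have : 0 <= \sum_(j < K) sqnorm (p j.+1 - p j).
    by apply: sumr_ge0 => j _; exact: sqnorm_ge0.
  have : 0 <= \sum_(j < K) sqnorm (q j.+1 - q j).
    by apply: sumr_ge0 => j _; exact: sqnorm_ge0.
  rewrite /S0; lra.
have hgap : forall k, dot (p k.+1) (q k.+1 - q k) ^+ 2 <=
                     k.+1%:R * (2 * S0) * sqnorm (q k.+1 - q k).
  move=> k; have hcs := cauchy_schwarz (p k.+1) (q k.+1 - q k).
  apply: (le_trans hcs).
  rewrite -!sqnormE ler_wpM2r ?sqnorm_ge0 //.
  apply: le_trans (sum_bound p (dp0 H) k.+1) _.
  by rewrite ler_wpM2l ?ler0n // (hsum k.+1).1.
apply: contrapT => hno.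
set c := eta ^+ 2 / (2 * S0 + 1).
have hc : 0 < c by rewrite /c divr_gt0 ?exprn_gt0 //; lra.
have hlow : forall k, c * (k.+1%:R)^-1 <= sqnorm (q k.+1 - q k).
  move=> k; have hk : 0 < k.+1%:R :> R by rewrite ltr0n.
  rewrite /c mulrAC ler_pdivrMr; last by lra.
  rewrite ler_pdivrMr //.
  have hsq := sqnorm_ge0 (q k.+1 - q k).
  have hk1 : 1 <= k.+1%:R :> R by rewrite ler1n.
  have [hg|hg] := lerP (dot (p k.+1) (q k.+1 - q k)) eta.
    have hs : eta < sqnorm (q k.+1 - q k).
      rewrite ltNge; apply/negP => hs; apply: hno; exists k; split => //.
    have h3 : 1 <= (2 * S0 + 1) * k.+1%:R by nra.
    have h4 : sqnorm (q k.+1 - q k) <= sqnorm (q k.+1 - q k) * ((2 * S0 + 1) * k.+1%:R) by nra.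
    rewrite -mulrA; nra.
  have := hgap k; move: (dot _ _) hg => g hg hgk.
  have h5 : eta ^+ 2 <= g ^+ 2 by nra.
  nra.
have [K hK] := harmonic_unbounded (2 * S0 / c).
have : c * \sum_(j < K) (j.+1%:R)^-1 <= 2 * S0.
  apply: le_trans (hsum K).2; rewrite mulr_sumr; apply: ler_sum => j _.
  exact: hlow.
rewrite -(big_mkord xpredT (fun j => (j.+1%:R : R)^-1)).
move: hK; rewrite ltr_pdivrMr // => hK; lra.
Qed.
Lemma cluster_pick (T : topologicalType) (K : set T) (u : nat -> T)
  (J : nat -> set nat) :
  compact K -> (forall j, J j !=set0) ->
  (forall i j, (i <= j)%N -> J j `<=` J i) -> (forall k, J 0%N k -> K (u k)) ->
  exists2 z, K z & forall j V, nbhs z V -> exists2 k, J j k & V (u k).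
Proof.
move=> cK Jne Jdec JK.
pose F := filter_from [set: nat] (fun j => u @` J j).
have FF : Filter F.
  apply: filter_from_filter; first by exists 0%N.
  move=> i j _ _; exists (maxn i j) => //.
  move=> _ [k Jk <-]; split; exists k => //.
    by apply: Jdec Jk; rewrite leq_maxl.
  by apply: Jdec Jk; rewrite leq_maxr.
have PF : ProperFilter F.
  apply: filter_from_proper => j _; have [k Jk] := Jne j.
  by exists (u k); exists k.
have FK : F K by exists 0%N => // _ [k Jk <-]; exact: JK.
have [z [Kz clz]] := cK F PF FK.
exists z => // j V zV.
have Fj : F (u @` J j) by exists j.
have [_ [[k Jk <-] Vk]] := clz _ _ Fj zV.
by exists k.
Qed.
Lemma small_inv {R : realType} (e : R) : 0 < e -> exists j, (j.+1%:R)^-1 <= e.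
Proof.
move=> e0; have := @archi_boundP R (e^-1); rewrite invr_ge0 (ltW e0) => /(_ isT).
set n := Num.Def.archi_bound _ => hn; exists n.
rewrite -[e]invrK lef_pV2 ?posrE ?invr_gt0 ?ltr0n //.
by apply: (le_trans (ltW hn)); rewrite ler_nat.
Qed.

Lemma le_eps {R : realType} (a b : R) : (forall eps, 0 < eps -> a <= b + eps) -> a <= b.
Proof.
move=> h; rewrite leNgt; apply/negP => hab.
have := h ((a - b) / 2); rewrite divr_gt0 ?subr_gt0 //; lra.
Qed.

Lemma norm_le_sq {R : realType} {N : nat} (v : 'rV[R]_N) (e : R) :
  0 <= e -> sqnorm v <= e ^+ 2 -> `|v| <= e.
Proof.
move=> e0 hv; change (mx_norm v <= e); rewrite mx_normrE; apply: bigmax_le => // -[i j] _ /=.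
rewrite (ord1 i); have := coord_le_sqnorm v j => h.
rewrite ler_norml; apply/andP; split; nra.
Qed.

Lemma nbhs_rV {R : realType} {N : nat} (z : 'rV[R]_N) (V : set 'rV[R]_N) :
  nbhs z V -> exists2 e : R, 0 < e & forall w, `|z - w| < e -> V w.
Proof. by move/nbhs_normP => [e e0 hV]; exists e => // w hw; apply: hV. Qed.

Lemma rV_nbhs {R : realType} {N : nat} (z : 'rV[R]_N) (e : R) :
  0 < e -> nbhs z (fun w => `|z - w| < e).
Proof. move=> e0; apply: (proj2 (nbhs_normP z _)); by exists e. Qed.

Lemma cont_lin {R : realType} {N : nat} (c : 'I_N -> R) :
  continuous (fun z : 'rV[R]_N => \sum_(i < N) z ord0 i * c i).
Proof.
move=> z; apply: (continuous_big add_continuous) => i _ {}z.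
have h1 : (fun x : 'rV[R]_N => x ord0 i) @ z --> z ord0 i.
  exact: (@coord_continuous R 1 N ord0 i z).
exact: (cvgM h1 (cvg_cst (c i))).
Qed.

Lemma cont_sq {R : realType} {N : nat} :
  continuous (fun z : 'rV[R]_N => sqnorm z).
Proof.
move=> z; rewrite /sqnorm; apply: (continuous_big add_continuous) => i _ w.
rewrite /GRing.exp /=.
have h1 : (fun x : 'rV[R]_N => x ord0 i) @ w --> w ord0 i.
  exact: (@coord_continuous R 1 N ord0 i w).
exact: (cvgM h1 h1).
Qed.
Lemma Gd_cont {R : realType} {N : nat} (x0 : 'rV[R]_N) : continuous (Gd x0).
Proof.
move=> z.
have h1 := @cont_lin R N (fun i => x0 ord0 i) z.
have h2 := @cont_sq R N z.
have -> : Gd x0 = (fun z => \sum_(i < N) z ord0 i * x0 ord0 i - sqnorm z * 2^-1).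
  apply/funext => w; rewrite /Gd /dot; congr (_ - _).
  by apply: eq_bigr => i _; rewrite mulrC.
exact: (cvgB h1 (cvgM h2 (cvg_cst _))).
Qed.

Theorem dykstra_main {R : realType} {N : nat} {A B : set 'rV[R]_N}
  {x y p q : nat -> 'rV[R]_N} c0 :
  dyk A B x y p q -> A c0 -> B c0 -> closed A -> compact B ->
  exists z, [/\ A z, B z, x @ \oo --> z &
    forall c, A c -> B c -> Gd (x 0%N) c <= Gd (x 0%N) z].
Proof.
move=> H Ac0 Bc0 clA cpB.
pose eta (j : nat) : R := (j.+1%:R)^-1.
have eta0 : forall j, 0 < eta j by move=> j; rewrite /eta invr_gt0 ltr0n.
pose J j := [set k | dot (p k.+1) (q k.+1 - q k) <= eta j /\
                     sqnorm (q k.+1 - q k) <= eta j].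
have [z Bz hz] : exists2 z, B z &
    forall j V, nbhs z V -> exists2 k, J j k & V (x k.+1).
  apply: (@cluster_pick _ B (fun k => x k.+1) J cpB).
  - move=> j; have [|k hk] := dyk_good c0 H Ac0 Bc0 (eta j) (eta0 j).
      by rewrite /eta invf_le1 ?ler1n ?ltr0n.
    by exists k.
  - move=> i j ij k [h1 h2]; have hij : eta j <= eta i.
      by rewrite /eta lef_pV2 ?posrE ?ltr0n // ler_nat.
    split; lra.
  - by move=> k _; exact: (dx H k).1.
have Az : A z.
  rewrite (proj1 (closure_id A) clA) => V zV.
  have [e e0 he] := nbhs_rV _ _ zV.
  have e2 : 0 < e / 2 by lra.
  have [j hj] := small_inv _ (exprn_gt0 2 e2).
  have [k [hk1 hk2] hk3] := hz j _ (rV_nbhs z _ e2).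
  exists (y k); split; first exact: (dy H k).1.
  apply: he.
  have hq : `|q k.+1 - q k| <= e / 2.
    by apply: norm_le_sq; [lra | exact: le_trans hk2 hj].
  have -> : z - y k = (z - x k.+1) - (q k.+1 - q k).
    by rewrite (dyk_x H k); apply/rowP => i; rewrite !mxE; ring.
  apply: (le_lt_trans (ler_normB _ _)); lra.
have Gb : forall eps : R, 0 < eps -> exists k,
    Fd x y p q k.+1 <= Gd (x 0%N) z + eps.
  move=> eps eps0.
  have e2 : 0 < eps / 2 by lra.
  have := Gd_cont (x 0%N) z; move/cvgrPdist_lt => /(_ _ e2) hV.
  have [j hj] := small_inv _ e2.
  have [k [hk1 hk2] hk3] := hz j _ hV.
  exists k; have := dyk_D3 H k.
  move: hk3 hk1; rewrite /= ltr_norml /eta => /andP[h3 _] hk1 hD.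
  have hk1' : Fd x y p q k.+1 - Gd (x 0%N) (x k.+1) <= j.+1%:R^-1.
    by rewrite hD; exact: hk1.
  move: (j.+1%:R^-1 : R) hj hk1' => t hj hk1'; lra.
have opt : forall c, A c -> B c -> Gd (x 0%N) c <= Gd (x 0%N) z.
  move=> c Ac Bc; apply: le_eps => eps eps0.
  have [k hk] := Gb eps eps0.
  exact: le_trans (dyk_Flow H c k.+1 Ac Bc) hk.
exists z; split => //.
apply/cvgrPdist_lt => e e0.
have e2 : 0 < e / 2 by lra.
have [k hk] := Gb ((e / 2) ^+ 2 / 2) ltac:(apply: divr_gt0 => //; exact: exprn_gt0).
exists k.+1 => // n /= hn.
have h1 := dyk_D1 H n z Az Bz.
have h2 := dyk_Fdec H _ _ hn.
have : `|x n - z| <= e / 2.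
  apply: norm_le_sq; first lra.
  lra.
rewrite distrC; lra.
Qed.
Lemma dmulK {R : realType} {N : nat} (r : 'I_N -> R) (z : 'rV[R]_N) :
  (forall i, 0 < r i) -> dmul r (dmul (fun i => (r i)^-1) z) = z.
Proof.
by move=> hr; apply/rowP => i; rewrite !mxE mulrA mulfV ?mul1r // gt_eqF.
Qed.

Lemma dmulKV {R : realType} {N : nat} (r : 'I_N -> R) (z : 'rV[R]_N) :
  (forall i, 0 < r i) -> dmul (fun i => (r i)^-1) (dmul r z) = z.
Proof.
by move=> hr; apply/rowP => i; rewrite !mxE mulrA mulVf ?mul1r // gt_eqF.
Qed.

Lemma dimageP {R : realType} {N : nat} (r : 'I_N -> R) (S : set 'rV[R]_N) z :
  (forall i, 0 < r i) -> dimage r S z <-> S (dmul (fun i => (r i)^-1) z).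
Proof.
move=> hr; split=> [[w Sw <-]|Sz]; first by rewrite dmulKV.
by exists (dmul (fun i => (r i)^-1) z) => //; rewrite dmulK.
Qed.

Lemma dimage_cvx {R : realType} {N : nat} (r : 'I_N -> R) (S : set 'rV[R]_N) :
  cvx S -> cvx (dimage r S).
Proof.
move=> cS _ _ t [a Sa <-] [b Sb <-] ht.
exists (a + t *: (b - a)); first exact: cS.
by apply/rowP => i; rewrite !mxE; ring.
Qed.

Lemma sum_lin {R : realType} {N : nat} (c : 'I_N -> R) (a b : 'rV[R]_N) t :
  \sum_(i < N) (a + t *: (b - a)) ord0 i * c i =
  \sum_(i < N) a ord0 i * c i + t * (\sum_(i < N) b ord0 i * c i -
                                     \sum_(i < N) a ord0 i * c i).
Proof.
have E : forall u : 'rV[R]_N, \sum_(i < N) u ord0 i * c i = dot u (\row_i c i).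
  by move=> u; apply: eq_bigr => i _; rewrite mxE.
rewrite !E; dexp; ring.
Qed.

Lemma P3_cvx {R : realType} {N : nat} (xi : 'I_N -> R) mum mup :
  cvx (P3set xi mum mup).
Proof.
move=> a b t /andP[ha1 ha2] /andP[hb1 hb2] /andP[t0 t1]; rewrite /P3set /=.
rewrite sum_lin; apply/andP; split; nra.
Qed.

Lemma simplex_cvx {R : realType} {N : nat} : cvx (@simplex R N).
Proof.
move=> a b t [ha1 ha2] [hb1 hb2] /andP[t0 t1]; split.
  move=> i; rewrite !mxE; have := ha1 i; have := hb1 i; nra.
have := sum_lin (fun _ => 1) a b t.
rewrite !(eq_bigr _ (fun i _ => mulr1 _)) ha2 hb2 => ->; ring.
Qed.
Lemma norm_le_coord {R : realType} {N : nat} (v : 'rV[R]_N) (e : R) :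
  0 <= e -> (forall i, `|v ord0 i| <= e) -> `|v| <= e.
Proof.
move=> e0 hv; change (mx_norm v <= e); rewrite mx_normrE.
by apply: bigmax_le => // -[i j] _ /=; rewrite (ord1 i).
Qed.

Lemma le_sum_nonneg {R : realType} {N : nat} (f : 'I_N -> R) i :
  (forall j, 0 <= f j) -> f i <= \sum_(j < N) f j.
Proof.
move=> h; rewrite (bigD1 i) //= lerDl; apply: sumr_ge0 => j _; exact: h.
Qed.

Lemma P3img_closed {R : realType} {N : nat} (r : 'I_N -> R) xi (mum mup : R) :
  (forall i, 0 < r i) -> closed (dimage r (P3set xi mum mup)).
Proof.
move=> hr.
pose l := fun z : 'rV[R]_N => \sum_(i < N) z ord0 i * ((r i)^-1 * xi i).
have -> : dimage r (P3set xi mum mup) =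
    (l @^-1` [set t | mum <= t]) `&` (l @^-1` [set t | t <= mup]).
  apply/seteqP; split => z; rewrite /= dimageP // /P3set /=;
  have -> : \sum_(i < N) dmul (fun i => (r i)^-1) z ord0 i * xi i = l z
    by apply: eq_bigr => i _; rewrite mxE; ring.
    by move=> /andP[].
  by move=> [-> ->].
apply: closedI; apply: (continuous_closedP _).1.
- exact: cont_lin.
- exact: closed_ge.
- exact: cont_lin.
- exact: closed_le.
Qed.

Lemma simpimg_closed {R : realType} {N : nat} (r : 'I_N -> R) :
  (forall i, 0 < r i) -> closed (dimage r (@simplex R N)).
Proof.
move=> hr.
pose l := fun z : 'rV[R]_N => \sum_(i < N) z ord0 i * (r i)^-1.
have -> : dimage r (@simplex R N) =
    (\bigcap_(i in [set: 'I_N]) ((fun z : 'rV[R]_N => z ord0 i) @^-1` [set t | 0 <= t]))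
    `&` (l @^-1` [set t | t = 1]).
  apply/seteqP; split => z; rewrite /= dimageP // /simplex /=;
  have -> : \sum_(i < N) dmul (fun i => (r i)^-1) z ord0 i = l z
    by apply: eq_bigr => i _; rewrite mxE; ring.
    move=> [h1 h2]; split => // i _; have := h1 i.
    by rewrite mxE pmulr_rge0 // invr_gt0.
  move=> [h1 h2]; split => // i; rewrite mxE pmulr_rge0 ?invr_gt0 //.
  exact: h1.
apply: closedI.
  apply: closed_bigI => i _; apply: (continuous_closedP _).1.
    exact: (@coord_continuous R 1 N ord0 i).
  exact: closed_ge.
apply: (continuous_closedP _).1; last exact: closed_eq.
exact: (cont_lin (fun i => (r i)^-1)).
Qed.

Lemma simpimg_bounded {R : realType} {N : nat} (r : 'I_N -> R) :
  (forall i, 0 < r i) -> bounded_set (dimage r (@simplex R N)).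
Proof.
move=> hr; exists (\sum_(i < N) r i); split; first exact: num_real.
move=> M hM _ [w [hw1 hw2] <-].
apply: norm_le_coord.
  apply: le_trans (ltW hM); apply: sumr_ge0 => i _; exact: ltW.
move=> i; rewrite mxE; apply: le_trans (ltW hM).
have hwi : w ord0 i <= 1 by rewrite -hw2; exact: (le_sum_nonneg (fun j => w ord0 j)).
have hri := hr i; have hw := hw1 i.
have := le_sum_nonneg r i (fun j => ltW (hr j)).
rewrite ger0_norm; last exact: mulr_ge0 (ltW hri) hw.
nra.
Qed.
Theorem proposition2p2 (R : realType) (V : completeNormedModType R)
  (ip : V -> V -> R) (N : nat) (lambda : R) (a xs : 'I_N -> V)
  (xi : 'I_N -> R) (mum mup : R)
  (x y p q : nat -> 'rV[R]_N) :
  is_hilbert_inner ip ->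
  0 < lambda ->
  (forall i, a i != 0) ->
  (exists p0 : 'rV[R]_N, interior (@nonneg_orthant R N) p0 /\
      interior (P3set xi mum mup) p0 /\ @P1set R N p0) ->
  let d := fun i => lambda * `|a i| ^+ 2 in
  let beta : 'rV[R]_N := \row_i (ip (a i) (xs i) + xi i) in
  let r := fun i => Num.sqrt (d i) in
  let rinv := fun i => (Num.sqrt (d i))^-1 in
  x 0%N = dmul rinv beta ->
  p 0%N = 0 -> q 0%N = 0 ->
  (forall k, is_proj (dimage r (P3set xi mum mup)) (x k + p k) (y k)) ->
  (forall k, p k.+1 = x k + p k - y k) ->
  (forall k, is_proj (dimage r (@simplex R N)) (y k + q k) (x k.+1)) ->
  (forall k, q k.+1 = y k + q k - x k.+1) ->
  exists qlim : 'rV[R]_N,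
    x @ \oo --> qlim /\
    Pset xi mum mup (dmul rinv qlim) /\
    (forall p' : 'rV[R]_N, Pset xi mum mup p' ->
       objective d beta (dmul rinv qlim) <= objective d beta p').
Proof.
move=> _ hl ha [p0 [hp01 [hp02 hp03]]] d beta r rinv hx0 hp0 hq0 hy hp hx hq.
have hd : forall i, 0 < d i.
  by move=> i; rewrite /d mulr_gt0 // exprn_gt0 // normr_gt0.
have hr : forall i, 0 < r i by move=> i; rewrite /r sqrtr_gt0.
set A := dimage r (P3set xi mum mup).
set B := dimage r (@simplex R N).
have H : dyk A B x y p q.
  by constructor => //; [exact: dimage_cvx (P3_cvx _ _ _) | exact: dimage_cvx simplex_cvx].
have Ac0 : A (dmul r p0).
  by exists p0 => //; exact: interior_subset hp02.
have Bc0 : B (dmul r p0).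
  by exists p0 => //; split => //; exact: interior_subset hp01.
have [z [Az Bz cvz opt]] := dykstra_main (dmul r p0) H Ac0 Bc0
  (@P3img_closed R N r xi mum mup hr)
  (bounded_closed_compact (simpimg_bounded r hr) (simpimg_closed r hr)).
have objE : forall w, objective d beta w = - Gd (x 0%N) (dmul r w).
  move=> w; rewrite /objective /Gd hx0 /dot /sqnorm.
  have E1 : \sum_(i < N) dmul rinv beta ord0 i * dmul r w ord0 i =
            \sum_(i < N) w ord0 i * beta ord0 i.
    apply: eq_bigr => i _; rewrite !mxE /rinv -/(r i).
    move: (r i) (hr i) (ip _ _ + _) => ri hri c.
    by field; rewrite gt_eqF.
  have E2 : \sum_(i < N) dmul r w ord0 i ^+ 2 = \sum_(i < N) d i * w ord0 i ^+ 2.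
    apply: eq_bigr => i _; rewrite !mxE exprMn /r sqr_sqrtr //.
    exact: ltW.
  rewrite E1 E2; lra.
exists z; split => //; split.
  split; first by have := (dimageP _ _ _ hr).1 Bz.
  by have := (dimageP _ _ _ hr).1 Az.
move=> p' [hs h3].
rewrite !objE dmulK //.
suff : Gd (x 0%N) (dmul r p') <= Gd (x 0%N) z by lra.
apply: opt; by exists p'.
Qed.
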